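(* Let $\Omega\subset\mathbb R^2$ be compact and contained in a ball of radius $D$. Let $n\ge 1$ be an integer and $0<\varepsilon\le 1$. Let $\nu_k=(\cos(\pi k/n),\sin(\pi k/n))$ for $0\le k<n$, and let $U_0,\dots,U_{n-1}$ be independent uniform random variables on $[0,1)$. For $x,y\in\Omega$ and $0\le k<n$ put $a_k(x,y)=\min(x\cdot\nu_k,y\cdot\nu_k)$, $b_k(x,y)=\max(x\cdot\nu_k,y\cdot\nu_k)$ and \[ N_k(x,y)=\#\{q\in\mathbb Z:\ \varepsilon(q+U_k)\in[a_k(x,y),b_k(x,y))\}. \] Then there exist constants $C_R=C_R(\Omega)\ge e$ and $C_E=C_E(\Omega)<\infty$, depending only on $\Omega$, such that, setting $R=C_R n/\varepsilon$, with probability at least $1-2R^{-10}$, \[ \sup_{x,y\in\Omega}\left|\sum_{k=0}^{n-1}\left(N_k(x,y)-\frac{b_k(x,y)-a_k(x,y)}{\varepsilon}\right)\right|\le C_E\left(\sqrt{n\log R}+\log R\right). \]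
   Context: $N_k(x,y)$ counts the lines of the randomly shifted parallel family $\{z:\ z\cdot\nu_k=\varepsilon(q+U_k),\ q\in\mathbb Z\}$ crossed by the segment from $x$ to $y$, with a half-open interval convention for endpoints. *)

(* Defs.v *)
From HB Require Import structures.
From mathcomp Require Import all_boot all_order all_algebra.
From mathcomp Require Import all_classical all_reals all_analysis.
From mathcomp Require Import finmap.
Set Implicit Arguments. Unset Strict Implicit. Unset Printing Implicit Defensive.
Import Order.TTheory GRing.Theory Num.Theory.
Import numFieldNormedType.Exports.
Local Open Scope classical_set_scope.
Local Open Scope ring_scope.

Definition nu {R : realType} (n k : nat) : R * R :=
  (cos (pi * k%:R / n%:R), sin (pi * k%:R / n%:R)).

Definition dot2 {R : realType} (x y : R * R) : R := x.1 * y.1 + x.2 * y.2.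

Definition ak {R : realType} (n k : nat) (x y : R * R) : R :=
  Num.min (dot2 x (nu n k)) (dot2 y (nu n k)).
Definition bk {R : realType} (n k : nat) (x y : R * R) : R :=
  Num.max (dot2 x (nu n k)) (dot2 y (nu n k)).

Definition Nk {R : realType} (eps u : R) (n k : nat) (x y : R * R) : nat :=
  (#|` fset_set [set q : int | ak n k x y <= eps * (q%:~R + u) < bk n k x y] |)%fset.

Definition iid_uniform01 {R : realType} (d : measure_display)
  (T : measurableType d) (P : probability T R) (n : nat) (U : 'I_n -> T -> R)
  : Prop :=
  (forall k, measurable_fun setT (U k)) /\
  (forall k (A : set R), measurable A ->
     P (U k @^-1` A) = lebesgue_measure (A `&` `[0%R, 1%R[)) /\
  (forall A : 'I_n -> set R, (forall k, measurable (A k)) ->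
     P (\bigcap_(k in [set: 'I_n]) (U k @^-1` A k))
     = (\prod_(k < n) P (U k @^-1` A k))%E).

(* Main.v *)
Require Import Defs.
Set Warnings "-notation-overridden,-ambiguous-paths,-notation-incompatible-prefix".
From HB Require Import structures.
From mathcomp Require Import all_boot all_order all_algebra.
From mathcomp Require Import all_classical all_reals all_analysis.
From mathcomp Require Import finmap zify ring lra.
Import Order.TTheory GRing.Theory Num.Theory.
Import numFieldNormedType.Exports.
Local Open Scope classical_set_scope.
Local Open Scope ring_scope.
Set Implicit Arguments. Unset Strict Implicit.

Section Chern.
Variable R : realType.

Lemma expR_le_quad (y : R) : `|y| <= 1/2 -> expR y <= 1 + y + 2 * y ^+ 2.
Proof.
move=> hy.
have hy' : -(1/2) <= y <= 1/2 by rewrite -ler_norml.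
case/andP: hy' => h1 h2.
have h3 := expR_ge1Dx (- y).
have h4 : 0 < 1 - y by lra.
have e0 := expR_gt0 y.
have : expR (- y) * expR y = 1 by rewrite -expRD addNr expR0.
move=> h5.
have h6 : (1 - y) * expR y <= 1.
  by rewrite -[X in _ <= X]h5; apply: ler_wpM2r => //; exact: ltW.
have h7 : 1 <= (1 - y) * (1 + y + 2 * y ^+ 2).
  have : 0 <= y ^+ 2 * (1 - 2 * y) by apply: mulr_ge0; [exact: sqr_ge0| lra].
  have -> : (1 - y) * (1 + y + 2 * y ^+ 2) = 1 + y ^+ 2 * (1 - 2 * y) by ring.
  move=> h; lra.
have h8 : (1 - y) * expR y <= (1 - y) * (1 + y + 2 * y ^+ 2) by lra.
by rewrite ler_pM2l in h8.
Qed.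

Lemma mgf_bound (p mu : R) : 0 <= p <= 1 -> `|mu| <= 1/2 ->
  p * expR (mu * (1 - p)) + (1 - p) * expR (mu * (0 - p)) <= expR (2 * mu ^+ 2).
Proof.
move=> /andP[p0 p1] hmu.
have hm : -(1/2) <= mu <= 1/2 by rewrite -ler_norml.
case/andP: hm => m1 m2.
have a1 : `|mu * (1 - p)| <= 1/2.
  rewrite normrM (ger0_norm (x := 1 - p)) ?subr_ge0 //.
  apply: le_trans hmu; rewrite ler_piMr //; lra.
have a2 : `|mu * (0 - p)| <= 1/2.
  rewrite normrM sub0r normrN (ger0_norm (x := p)) //.
  apply: le_trans hmu; rewrite ler_piMr //.
have b1 := expR_le_quad a1.
have b2 := expR_le_quad a2.
apply: le_trans (expR_ge1Dx _).
have c1 : p * expR (mu * (1 - p)) <= p * (1 + mu * (1 - p) + 2 * (mu * (1 - p)) ^+ 2).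
  by rewrite ler_wpM2l.
have c2 : (1 - p) * expR (mu * (0 - p)) <= (1 - p) * (1 + mu * (0 - p) + 2 * (mu * (0 - p)) ^+ 2).
  by rewrite ler_wpM2l // subr_ge0.
have e : p * (1 + mu * (1 - p) + 2 * (mu * (1 - p)) ^+ 2) +
   (1 - p) * (1 + mu * (0 - p) + 2 * (mu * (0 - p)) ^+ 2)
   = 1 + 2 * mu ^+ 2 - 2 * (mu ^+ 2 * (1 - p * (1 - p))) by ring.
have : 0 <= mu ^+ 2 * (1 - p * (1 - p)).
  apply: mulr_ge0; first exact: sqr_ge0.
  have : p * (1 - p) <= 1 by rewrite -[1 in X in _ <= X](mul1r 1); apply: ler_pM => //; lra.
  lra.
lra.
Qed.

Definition wt n (p : 'I_n -> R) (f : {ffun 'I_n -> bool}) : R :=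
  \prod_(k < n) (if f k then p k else 1 - p k).
Definition dev n (p : 'I_n -> R) (f : {ffun 'I_n -> bool}) : R :=
  \sum_(k < n) ((f k)%:R - p k).

Lemma wt_ge0 n (p : 'I_n -> R) f : (forall k, 0 <= p k <= 1) -> 0 <= wt p f.
Proof.
move=> hp; apply: prodr_ge0 => k _; case: (f k); have := hp k; lra.
Qed.

Lemma mgf_sum n (p : 'I_n -> R) (mu s : R) : (forall k, 0 <= p k <= 1) ->
  `|mu| <= 1/2 ->
  \sum_(f : {ffun 'I_n -> bool}) wt p f * expR (mu * dev p f - s)
   <= expR (- s) * expR (2 * mu ^+ 2) ^+ n.
Proof.
move=> hp hmu.
have -> : \sum_(f : {ffun 'I_n -> bool}) wt p f * expR (mu * dev p f - s) =
   expR (- s) * \prod_(k < n) \sum_(b : bool)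
      ((if b then p k else 1 - p k) * expR (mu * (b%:R - p k))).
  rewrite bigA_distr_bigA mulr_sumr; apply: eq_bigr => f _.
  rewrite /wt /dev addrC expRD mulrCA; congr (_ * _).
  rewrite mulr_sumr expR_sum -big_split /=.
  by apply: eq_bigr => k _.
rewrite ler_wpM2l ?expR_ge0 //.
have -> : expR (2 * mu ^+ 2) ^+ n = \prod_(k < n) expR (2 * mu ^+ 2).
  by rewrite prodr_const card_ord.
apply: ler_prod => k _; rewrite big_bool /=; have := hp k => /andP[p0 p1].
apply/andP; split.
  by apply: addr_ge0; apply: mulr_ge0; rewrite ?expR_ge0 ?subr_ge0.
by have := mgf_bound (hp k) hmu.
Qed.

Lemma one_tail n (p : 'I_n -> R) (sg lam t : R) : (forall k, 0 <= p k <= 1) ->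
  `|sg| = 1 -> 0 <= lam <= 1/2 ->
  \sum_(f : {ffun 'I_n -> bool} | t < sg * dev p f) wt p f
   <= expR (- (lam * t)) * expR (2 * lam ^+ 2) ^+ n.
Proof.
move=> hp hsg /andP[l0 l1].
have hmu : `|lam * sg| <= 1/2 by rewrite normrM hsg mulr1 ger0_norm.
have := mgf_sum (lam * t) hp hmu.
have -> : (lam * sg) ^+ 2 = lam ^+ 2.
  by rewrite exprMn -(real_normK (num_real sg)) hsg expr1n mulr1.
apply: le_trans.
rewrite big_mkcond /=; apply: ler_sum => f _.
have w0 := wt_ge0 f hp.
case: ifP => h; last by rewrite mulr_ge0 // expR_ge0.
rewrite -[X in X <= _]mulr1 ler_wpM2l //.
apply: le_trans (expR_ge1Dx _).
have : 0 <= lam * (sg * dev p f - t) by rewrite mulr_ge0 // subr_ge0 ltW.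
rewrite mulrBr mulrA; lra.
Qed.

Lemma dev_bound n (p : 'I_n -> R) f : (forall k, 0 <= p k <= 1) ->
  `|dev p f| <= n%:R.
Proof.
move=> hp; rewrite /dev (le_trans (ler_norm_sum _ _ _)) //.
have -> : n%:R = \sum_(k < n) (1 : R) by rewrite sumr_const card_ord.
apply: ler_sum => k _; have := hp k; case: (f k) => /=; rewrite ler_norml; lra.
Qed.

Lemma two_tail n (p : 'I_n -> R) (t : R) : (0 < n)%N ->
  (forall k, 0 <= p k <= 1) -> 0 <= t ->
  \sum_(f : {ffun 'I_n -> bool} | t < `|dev p f|) wt p f
   <= 2 * expR (- (t ^+ 2 / (8 * n%:R))).
Proof.
move=> n0 hp t0.
have n0' : (0 : R) < n%:R by rewrite ltr0n.
have [tn|nt] := leP t n%:R; last first.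
  rewrite big_pred0; first by rewrite mulr_ge0 ?expR_ge0.
  by move=> f; apply/negbTE; rewrite -leNgt (le_trans (dev_bound f hp)) // ltW.
set lam := t / (4 * n%:R).
have hl : 0 <= lam <= 1/2.
  apply/andP; split; first by rewrite divr_ge0 // mulr_ge0 // ltW.
  rewrite ler_pdivrMr ?mulr_gt0 //; lra.
have e1 : expR (- (lam * t)) * expR (2 * lam ^+ 2) ^+ n = expR (- (t ^+ 2 / (8 * n%:R))).
  rewrite -expRM_natl -expRD; congr expR; rewrite /lam; field.
  by rewrite lt0r_neq0.
apply: (@le_trans _ _ (\sum_(f : {ffun 'I_n -> bool} | t < 1 * dev p f) wt p f +
                      \sum_(f : {ffun 'I_n -> bool} | t < -1 * dev p f) wt p f)).
  rewrite [X in X <= _]big_mkcond [X in _ <= X + _]big_mkcond [X in _ <= _ + X]big_mkcond.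
  rewrite -big_split /=; apply: ler_sum => f _.
  have w0 := wt_ge0 f hp.
  rewrite !mul1r mulN1r.
  case: ifP => h; last by case: ifP; case: ifP; rewrite ?addr0 ?add0r // ?addr_ge0.
  have : t < dev p f \/ t < - dev p f.
    move: h; rewrite ltr_normr => /orP[]; by [left|right].
  by case=> ->; case: ifP => _; rewrite ?addr0 ?add0r ?lerDl ?lerDr.
rewrite mulr2n mulrDl mul1r -e1.
by apply: lerD; apply: one_tail => //; rewrite ?normrN normr1.
Qed.
End Chern.

Lemma card_intI (A : int) (N : nat) :
  (#|` fset_set ((fun i : nat => (A + i%:Z)%R) @` `I_N)| = N)%fset.
Proof.
rewrite fset_set_image; last exact: finite_II.
rewrite card_imfset; last by move=> i j /= /addrI [].
by rewrite fset_set_II card_imfset //= ?size_enum_ord; last exact: val_inj.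
Qed.

Section Cnt.
Variable R : realType.

Definition cntI (eps u a b : R) : nat :=
  (#|` fset_set [set q : int | a <= eps * (q%:~R + u) < b]|)%fset.

Lemma cntI_eq (eps u a b : R) : 0 < eps ->
  let A := Num.ceil (a / eps - u) in let B := Num.ceil (b / eps - u) in
  (cntI eps u a b)%:~R = Num.max 0 (B - A)%:~R :> R.
Proof.
move=> e0 A B.
have key : forall q : int, (a <= eps * (q%:~R + u) < b) = (A <= q < B).
  move=> q; rewrite /A /B ceil_le_int ceil_gt_int.
  rewrite lerBlDr -ler_pdivrMl // ltrBrDr -ltr_pdivlMl //.
  by rewrite [a / eps]mulrC [b / eps]mulrC.
rewrite /cntI.
have [AB|BA] := leP A B.
  have -> : [set q : int | a <= eps * (q%:~R + u) < b] =
    (fun i : nat => (A + i%:Z)%R) @` `I_(`|B - A|%N).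
    apply/seteqP; split => q /=.
      rewrite key => /andP[Aq qB]; exists `|q - A|%N.
        lia.
      lia.
    case=> i /= iN <-; rewrite key; lia.
  rewrite card_intI; have -> : (`|B - A|%N : int) = B - A by lia.
  by rewrite max_r // ler0z subr_ge0.
have -> : [set q : int | a <= eps * (q%:~R + u) < b] = set0.
  apply/seteqP; split => q //=; rewrite key; lia.
rewrite fset_set0 cardfs0 max_l // lerz0; lia.
Qed.

Definition Aset (p sg : R) : set R := `[0, p - sg[ `|` `[1 - sg, 1 + p - sg[.

Lemma bern (eps a b u : R) : 0 < eps -> a <= b -> 0 <= u < 1 ->
  let l := (b - a) / eps in let p := l - (Num.floor l)%:~R in
  let sg := (Num.ceil (a / eps))%:~R - a / eps in
  (cntI eps u a b)%:R - l = (asbool (Aset p sg u))%:R - p.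
Proof.
move=> e0 ab /andP[u0 u1] l p sg.
have l0 : 0 <= l by rewrite divr_ge0 ?subr_ge0 // ltW.
set s := a / eps.
set A := Num.ceil (s - u).
set m := Num.floor l.
have hm := floor_itv l; rewrite -/m in hm.
have hsA := ceil_itv (s - u); rewrite -/A in hsA.
set g := A%:~R - (s - u).
have g01 : 0 <= g < 1.
  move: hsA; rewrite /g intrD /= => /andP[h1 h2]; apply/andP; split; lra.
have hB : Num.ceil (b / eps - u) = A + Num.ceil (l - g).
  have -> : b / eps - u = (l - g) + A%:~R.
    rewrite /g /l /s; field; exact: lt0r_neq0.
  by rewrite ceilDrz ?intr_int // intrKceil addrC.
have hp01 : 0 <= p < 1.
  move: hm; rewrite /p intrD /= => /andP[h1 h2]; apply/andP; split; lra.
have hc : Num.ceil (l - g) = if g < p then m + 1 else m.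
  apply: ceil_def; move: hm g01 hp01; rewrite /p !intrD /=.
  case: ifP => gp /andP[h1 h2] /andP[h3 h4] /andP[h5 h6]; apply/andP; split; try lra.
have cnt : (cntI eps u a b)%:R = (if g < p then m + 1 else m)%:~R :> R.
  have := cntI_eq u a b e0; rewrite /= hB -/s -/A hc addrAC subrr add0r.
  have m0 : 0 <= m by rewrite /m floor_ge0.
  move=> h; rewrite pmulrn h max_r // ler0z; case: ifP => _; lia.
have hs := ceil_itv s.
have sgdef : sg = (Num.ceil s)%:~R - s by [].
have key : (g < p) = `[< Aset p sg u >].
  have [hu|hu] := ltP u (1 - sg).
    have eA : A = Num.ceil s.
      apply: ceil_def; move: hs; rewrite intrD /= => /andP[h1 h2]; apply/andP; split; lra.
    have eg : g = sg + u by rewrite /g eA sgdef; ring.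
    apply/idP/idP => h.
      apply/asboolP; left; rewrite /= in_itv /=; apply/andP; split; lra.
    move/asboolP: h => [|]; rewrite /= in_itv /= => /andP[h1 h2]; lra.
  have eA : A = Num.ceil s - 1.
    apply: ceil_def; move: hs; rewrite !intrD /= => /andP[h1 h2]; apply/andP; split; lra.
  have eg : g = sg + u - 1 by rewrite /g eA sgdef intrD /=; ring.
  apply/idP/idP => h.
    apply/asboolP; right; rewrite /= in_itv /=; apply/andP; split; lra.
  move/asboolP: h => [|]; rewrite /= in_itv /= => /andP[h1 h2]; lra.
rewrite cnt -key; case: ifP => _; rewrite /p ?intrD /=; ring.
Qed.
End Cnt.

Section Leb.
Variable R : realType.

Lemma leb_co (a b : R) : a <= b -> lebesgue_measure (`[a, b[ : set R) = (b - a)%:E.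
Proof.
move=> ab; rewrite lebesgue_measure_itv /= lte_fin.
case: (ltP a b) => h; first by rewrite EFinN EFinD.
have bae : b = a by apply/eqP; rewrite eq_le h ab.
by rewrite bae subrr.
Qed.

Lemma measurable_Aset (p sg : R) : measurable (Aset p sg).
Proof. by rewrite /Aset; apply: measurableU; exact: measurable_itv. Qed.

Lemma leb_Aset (p sg : R) : 0 <= p < 1 -> 0 <= sg < 1 ->
  lebesgue_measure (Aset p sg `&` `[0, 1[) = p%:E.
Proof.
move=> /andP[p0 p1] /andP[s0 s1].
have [ps|ps] := leP sg p.
  have -> : Aset p sg `&` `[0, 1[ = `[0, p - sg[ `|` `[1 - sg, 1[.
    apply/seteqP; split => x /=; rewrite /Aset /= !in_itv /=.
      by move=> [[/andP[h1 h2]|/andP[h1 h2]] /andP[h3 h4]]; [left|right]; apply/andP; split; lra.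
    move=> [/andP[h1 h2]|/andP[h1 h2]]; split; try (apply/andP; split; lra);
      [left|right]; apply/andP; split; lra.
  have disj : `[0, p - sg[ `&` `[1 - sg, 1[ = set0 :> set R.
    apply/seteqP; split => x //=; rewrite !in_itv /= => -[/andP[h1 h2] /andP[h3 h4]]; lra.
  have := @measureU _ _ _ (@lebesgue_measure R) _ _ (measurable_itv _) (measurable_itv _) disj.
  move=> ->.
  have h1 : (0 : R) <= p - sg by lra.
  have h2 : (1 - sg : R) <= 1 by lra.
  rewrite [X in (X + _)%E](_ : _ = (p - sg - 0)%:E); last exact: (leb_co h1).
  rewrite [X in (_ + X)%E](_ : _ = (1 - (1 - sg))%:E); last exact: (leb_co h2).
  by rewrite -EFinD; congr EFin; ring.
have -> : Aset p sg `&` `[0, 1[ = `[1 - sg, 1 + p - sg[%classic.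
  apply/seteqP; split => x /=; rewrite /Aset /= !in_itv /=.
    by move=> [[/andP[h1 h2]|/andP[h1 h2]] /andP[h3 h4]]; apply/andP; split; lra.
  move=> /andP[h1 h2]; split; [right|]; apply/andP; split; lra.
by rewrite leb_co; [congr EFin; ring | lra].
Qed.
End Leb.


Lemma union_bound d (T : measurableType d) (R : realType)
  (mu : {measure set T -> \bar R}) (I : finType) (Q : pred I) (F : I -> set T) :
  (forall i, measurable (F i)) ->
  (mu (\big[setU/set0]_(i | Q i) F i) <= \sum_(i | Q i) mu (F i))%E.
Proof.
move=> mF.
suff [] : measurable (\big[setU/set0]_(i | Q i) F i) /\
  (mu (\big[setU/set0]_(i | Q i) F i) <= \sum_(i | Q i) mu (F i))%E by [].
apply: (big_rec2 (fun y1 y2 => measurable y1 /\ (mu y1 <= y2)%E)).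
  by split; [exact: measurable0 | rewrite measure0].
move=> i y1 y2 Qi [my h]; split; first exact: measurableU.
apply: le_trans (measureU2 _ _ _) _ => //.
by rewrite leeD2l.
Qed.

Section Prob.
Variables (R : realType) (d : measure_display) (T : measurableType d)
  (P : probability T R) (n : nat) (U : 'I_n -> T -> R).
Hypothesis hU : iid_uniform01 P U.

Lemma mpre k (A : set R) : measurable A -> measurable (U k @^-1` A).
Proof. by move=> mA; rewrite -[_ @^-1` _]setTI; apply: (hU.1 k). Qed.

Definition cyl (S : 'I_n -> set R) (f : {ffun 'I_n -> bool}) : set T :=
  \bigcap_(k in [set: 'I_n]) (U k @^-1` (if f k then S k else ~` S k)).

Lemma measurable_cyl S f : (forall k, measurable (S k)) -> measurable (cyl S f).
Proof.
move=> mS; apply: fin_bigcap_measurable => // k _; apply: mpre.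
by case: (f k) => //; apply: measurableC.
Qed.

Lemma prob_cyl (S : 'I_n -> set R) (p : 'I_n -> R) :
  (forall k, measurable (S k)) -> (forall k, P (U k @^-1` S k) = (p k)%:E) ->
  forall f, P (cyl S f) = (wt p f)%:E.
Proof.
move=> mS hp f; rewrite /cyl hU.2.2; last first.
  by move=> k; case: (f k) => //; apply: measurableC.
rewrite /wt -prodEFin; apply: eq_bigr => k _; case: (f k) => //.
rewrite preimage_setC probability_setC; last exact: mpre.
have h := hp k; rewrite /preimage in h; by rewrite h EFinB.
Qed.

Lemma prob_out k : P (U k @^-1` (~` `[0, 1[)) = 0%E.
Proof.
rewrite hU.2.1; last by apply: measurableC; exact: measurable_itv.
by rewrite setICl measure0.
Qed.
End Prob.


Section Det.
Variable R : realType.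

Lemma cnt_mono (eps u a b a' b' : R) : 0 < eps -> a' <= a -> b <= b' ->
  (cntI eps u a b)%:R <= (cntI eps u a' b')%:R :> R.
Proof.
move=> e0 aa bb; rewrite !pmulrn (cntI_eq u a b e0) (cntI_eq u a' b' e0) /=.
have hA : Num.ceil (a' / eps - u) <= Num.ceil (a / eps - u).
  by apply: le_ceil; rewrite lerD2r ler_pM2r ?invr_gt0.
have hB : Num.ceil (b / eps - u) <= Num.ceil (b' / eps - u).
  by apply: le_ceil; rewrite lerD2r ler_pM2r ?invr_gt0.
have h : (Num.ceil (b / eps - u) - Num.ceil (a / eps - u))%:~R <=
   (Num.ceil (b' / eps - u) - Num.ceil (a' / eps - u))%:~R :> R by rewrite ler_int; lia.
rewrite ge_max; apply/andP; split; rewrite le_max ?lexx //.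
by rewrite h orbT.
Qed.

Lemma cnt_empty (eps u a : R) : 0 < eps -> cntI eps u a a = 0%N.
Proof.
move=> e0; apply/eqP; rewrite -(eqr_nat R) pmulrn (cntI_eq u a a e0) subrr.
by rewrite max_l.
Qed.

Lemma term_upper (eps u a b a2 b2 r : R) : 0 < eps -> a <= b -> a2 <= a -> b <= b2 ->
  b2 - a2 <= b - a + 4 * r -> 0 <= u < 1 ->
  let l := (b2 - a2) / eps in let p := l - (Num.floor l)%:~R in
  let sg := (Num.ceil (a2 / eps))%:~R - a2 / eps in
  is_true ((cntI eps u a b)%:R - (b - a) / eps <= (`[< Aset p sg u >])%:R - p + 4 * r / eps).
Proof.
move=> e0 ab ha hb hl hu l p sg.
have ab2 : a2 <= b2 by lra.
have hB : (cntI eps u a2 b2)%:R - l = (`[< Aset p sg u >])%:R - p := bern e0 ab2 hu.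
have hm := cnt_mono u e0 ha hb.
have : l - (b - a) / eps <= 4 * r / eps.
  by rewrite /l -mulrBl ler_pM2r ?invr_gt0 //; lra.
lra.
Qed.

Lemma term_lower (eps u a b a2 b2 r : R) : 0 < eps -> a <= a2 -> a2 <= b2 ->
  (b2 <= b \/ b2 = a2) -> b - a - 4 * r <= b2 - a2 -> 0 <= u < 1 ->
  let l := (b2 - a2) / eps in let p := l - (Num.floor l)%:~R in
  let sg := (Num.ceil (a2 / eps))%:~R - a2 / eps in
  is_true ((`[< Aset p sg u >])%:R - p - 4 * r / eps <= (cntI eps u a b)%:R - (b - a) / eps).
Proof.
move=> e0 ha ab2 hb hl hu l p sg.
have hB : (cntI eps u a2 b2)%:R - l = (`[< Aset p sg u >])%:R - p := bern e0 ab2 hu.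
have hm : (cntI eps u a2 b2)%:R <= (cntI eps u a b)%:R :> R.
  case: hb => [hb|->]; first exact: cnt_mono.
  by rewrite cnt_empty.
have : (b - a) / eps - 4 * r / eps <= l.
  by rewrite /l -mulrBl ler_pM2r ?invr_gt0.
lra.
Qed.

Lemma min_lip (x y x' y' r : R) : `|x - x'| <= r -> `|y - y'| <= r ->
  `|Num.min x y - Num.min x' y'| <= r.
Proof.
rewrite !ler_norml => /andP[h1 h2] /andP[h3 h4].
case: (leP x y) => hxy; case: (leP x' y') => hxy';
  rewrite ?(min_l hxy) ?(min_r (ltW hxy)) ?(min_l hxy') ?(min_r (ltW hxy'));
  apply/andP; split; lra.
Qed.

Lemma max_lip (x y x' y' r : R) : `|x - x'| <= r -> `|y - y'| <= r ->
  `|Num.max x y - Num.max x' y'| <= r.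
Proof.
rewrite !ler_norml => /andP[h1 h2] /andP[h3 h4].
case: (leP x y) => hxy; case: (leP x' y') => hxy';
  rewrite ?(max_r hxy) ?(max_l (ltW hxy)) ?(max_r hxy') ?(max_l (ltW hxy'));
  apply/andP; split; lra.
Qed.

Lemma dot_lip (x x' : R * R) n k h : `|x.1 - x'.1| <= h -> `|x.2 - x'.2| <= h ->
  `|dot2 x (nu n k) - dot2 x' (nu n k)| <= 2 * h.
Proof.
move=> h1 h2; rewrite /dot2 /nu /=.
set C := cos _; set S := sin _.
have -> : x.1 * C + x.2 * S - (x'.1 * C + x'.2 * S) = (x.1 - x'.1) * C + (x.2 - x'.2) * S.
  by ring.
apply: le_trans (ler_normD _ _) _; rewrite !normrM.
have hC : `|C| <= 1 by rewrite ler_norml cos_geN1 cos_le1.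
have hS : `|S| <= 1 by rewrite ler_norml sin_geN1 sin_le1.
have e1 : `|x.1 - x'.1| * `|C| <= h.
  by rewrite -[h]mulr1; apply: ler_pM.
have e2 : `|x.2 - x'.2| * `|S| <= h.
  by rewrite -[h]mulr1; apply: ler_pM.
lra.
Qed.

Lemma grid_idx (z c rho h : R) : 0 < h -> `|z - c| <= rho ->
  exists i : nat, i%:R <= 2 * rho / h /\ `|z - (c - rho + i%:R * h)| <= h.
Proof.
move=> h0; rewrite ler_norml => /andP[z1 z2].
have x0 : 0 <= (z - c + rho) / h by rewrite divr_ge0 //; [lra | exact: ltW].
have /andP[t1 t2] := truncn_itv x0.
exists (Num.truncn ((z - c + rho) / h)); split.
  apply: le_trans t1 _; rewrite ler_pM2r ?invr_gt0 //; lra.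
set i := Num.truncn _ in t1 t2 *.
rewrite ler_pdivlMr // in t1; rewrite ltr_pdivrMr // in t2.
rewrite -natr1 mulrDl mul1r in t2.
rewrite ler_norml; apply/andP; split; lra.
Qed.
End Det.

Lemma in_bigsetU (T : Type) (I : finType) (Q : pred I) (F : I -> set T) i w :
  Q i -> F i w -> (\big[setU/set0]_(j | Q j) F j) w.
Proof. by move=> Qi Fw; rewrite (bigD1 i) //=; left. Qed.

Lemma bigsetU_in (T : Type) (I : finType) (Q : pred I) (F : I -> set T) w :
  (\big[setU/set0]_(j | Q j) F j) w -> exists2 i, Q i & F i w.
Proof.
elim/big_rec: _ => [//|i X Qi IH [Fw|Xw]]; first by exists i.
exact: IH.
Qed.

Lemma sq_bound (R : realType) (a b rho : R) : 0 <= rho ->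
  a ^+ 2 + b ^+ 2 <= rho ^+ 2 -> `|a| <= rho.
Proof.
move=> r0 h; have hb := sqr_ge0 b.
rewrite ler_norml; apply/andP; split; nra.
Qed.

Section Cfg.
Variable R : realType.
Definition gp (c : R * R) (rho h : R) (i j : nat) : R * R :=
  (c.1 - rho + i%:R * h, c.2 - rho + j%:R * h).
Definition alf (n : nat) (r : R) (x y : R * R) (s : bool) (k : nat) : R :=
  if s then ak n k x y - r else ak n k x y + r.
Definition bet (n : nat) (r : R) (x y : R * R) (s : bool) (k : nat) : R :=
  if s then bk n k x y + r else Num.max (ak n k x y + r) (bk n k x y - r).
Definition pv (eps a b : R) : R := (b - a) / eps - (Num.floor ((b - a) / eps))%:~R.
Definition sv (eps a : R) : R := (Num.ceil (a / eps))%:~R - a / eps.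

Lemma ak_le_bk n k (x y : R * R) : ak n k x y <= bk n k x y.
Proof. by rewrite /ak /bk; case: (leP (dot2 x (nu n k)) (dot2 y (nu n k))) => h;
  rewrite ?(min_l h) ?(max_r h) ?(min_r (ltW h)) ?(max_l (ltW h)) // ltW. Qed.

Lemma alf_le_bet n r x y s k : 0 <= r -> alf n r x y s k <= bet n r x y s k.
Proof.
move=> r0; rewrite /alf /bet; have := ak_le_bk n k x y; case: s => h.
  lra.
by rewrite le_max lexx.
Qed.

Lemma pv01 eps a b : 0 <= pv eps a b < 1.
Proof.
rewrite /pv; have /andP[h1 h2] := floor_itv ((b - a) / eps).
rewrite intrD /= in h2; apply/andP; split; lra.
Qed.

Lemma sv01 eps a : 0 <= sv eps a < 1.
Proof.
rewrite /sv; have /andP[h1 h2] := ceil_itv (a / eps).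
rewrite intrD /= in h1; apply/andP; split; lra.
Qed.
End Cfg.

Unset Implicit Arguments.
Set Strict Implicit.
Theorem lemma2 (R : realType) (Omega : set (R * R)) (D : R) (c : R * R) :
  compact Omega ->
  (forall x, Omega x -> (x.1 - c.1) ^+ 2 + (x.2 - c.2) ^+ 2 <= D ^+ 2) ->
  exists CR CE : R, expR 1 <= CR /\
    forall (n : nat) (eps : R), (1 <= n)%N -> 0 < eps -> eps <= 1 ->
    forall (d : measure_display) (T : measurableType d) (P : probability T R)
           (U : 'I_n -> T -> R),
    iid_uniform01 P U ->
    let Rr := CR * n%:R / eps in
    exists E : set T, measurable E /\
      (forall w, E w -> forall x y, Omega x -> Omega y ->
         `| \sum_(k < n) ((Nk eps (U k w) n k x y)%:R
                          - (bk n k x y - ak n k x y) / eps) |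
         <= CE * (Num.sqrt (n%:R * ln Rr) + ln Rr)) /\
      ((1 - 2 * Rr ^- 10)%:E <= P E)%E.
Proof.
move=> _ hOm.
set rho := `|D|.
have rho0 : 0 <= rho by rewrite /rho normr_ge0.
exists (Num.max (expR 1) (16 * rho + 1)), 12.
set CR := Num.max (expR 1) (16 * rho + 1).
have CRe : expR 1 <= CR by rewrite le_max lexx.
have CRr : 16 * rho + 1 <= CR by rewrite le_max lexx orbT.
split; first by [].
move=> n eps n1 e0 e1 d T P U hU Rr.
have n0 : (0 : R) < n%:R by rewrite ltr0n.
have n1' : (1 : R) <= n%:R by rewrite ler1n.
have ne : 1 <= n%:R / eps by rewrite ler_pdivlMr // mul1r; lra.
have e2 : 2 <= expR 1 :> R by have := expR_ge1Dx (1 : R); lra.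
have RrE : Rr = CR * (n%:R / eps) by rewrite /Rr mulrA.
have Rre : expR 1 <= Rr.
  by rewrite RrE -[X in X <= _]mulr1; apply: ler_pM => //; lra.
have Rr2 : 2 <= Rr by lra.
have Rr0 : 0 < Rr by lra.
set L := ln Rr.
have L1 : 1 <= L.
  by rewrite /L -[X in X <= _](expRK 1) ler_ln ?posrE ?expR_gt0.
set h := eps / (8 * n%:R).
have h0 : 0 < h by rewrite divr_gt0 // mulr_gt0.
set r := 2 * h.
have r0 : 0 <= r by rewrite mulr_ge0 // ltW.
have nr : n%:R * (4 * r / eps) = 1.
  rewrite /r /h; field; rewrite ?lt0r_neq0 //.
set G := (Num.truncn (16 * rho * n%:R / eps)).+1.
have GR : G%:R <= Rr.
  have x0 : 0 <= 16 * rho * (n%:R / eps).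
    by apply: mulr_ge0; [lra | apply: divr_ge0; lra].
  have := truncn_le (16 * rho * n%:R / eps).
  rewrite -[16 * rho * n%:R / eps]mulrA x0 => tl.
  rewrite /G -natr1 RrE -[16 * rho * n%:R / eps]mulrA.
  have : (16 * rho + 1) * (n%:R / eps) <= CR * (n%:R / eps).
    by rewrite ler_wpM2r // ltW // (lt_le_trans ltr01).
  lra.
set t := Num.sqrt (120 * n%:R * L).
have t0 : 0 <= t by apply: sqrtr_ge0.
pose C := ('I_G * 'I_G * 'I_G * 'I_G * bool)%type.
pose X' (cf : C) := gp c rho h cf.1.1.1.1 cf.1.1.1.2.
pose Y' (cf : C) := gp c rho h cf.1.1.2 cf.1.2.
pose al (cf : C) (k : 'I_n) := alf n r (X' cf) (Y' cf) cf.2 k.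
pose be (cf : C) (k : 'I_n) := bet n r (X' cf) (Y' cf) cf.2 k.
pose pc (cf : C) (k : 'I_n) := pv eps (al cf k) (be cf k).
pose Sc (cf : C) (k : 'I_n) := Aset (pc cf k) (sv eps (al cf k)).
pose BadU := \big[setU/set0]_(k < n) U k @^-1` (~` `[0, 1[).
pose BadC (cf : C) := \big[setU/set0]_(f : {ffun 'I_n -> bool} | t < `|dev (pc cf) f|)
   cyl U (Sc cf) f.
pose Bad := \big[setU/set0]_(cf : C) BadC cf.
have mSc cf k : measurable (Sc cf k) by apply: measurable_Aset.
have mBadU : measurable BadU.
  by apply: bigsetU_measurable => k _; apply: (mpre hU); apply: measurableC; exact: measurable_itv.
have mBad : measurable Bad.
  apply: bigsetU_measurable => cf _; apply: bigsetU_measurable => f _.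
  exact: (measurable_cyl hU).
exists (~` (BadU `|` Bad)); split; first by apply: measurableC; apply: measurableU.
have pcS cf k : P (U k @^-1` Sc cf k) = (pc cf k)%:E.
  rewrite hU.2.1 ?mSc //; apply: leb_Aset; [exact: pv01 | exact: sv01].
have pc01 cf k : 0 <= pc cf k <= 1.
  by have /andP[h1 h2] := pv01 eps (al cf k) (be cf k); rewrite h1 ltW.
split; last first.
  have hPU : (P BadU <= 0)%E.
    apply: le_trans (union_bound P _ _) _ => [k|].
      by apply: (mpre hU); apply: measurableC; exact: measurable_itv.
    by rewrite big1 // => k _; exact: prob_out hU k.
  have hB1 cf : (P (BadC cf) <= (2 * expR (- (t ^+ 2 / (8 * n%:R))))%:E)%E.
    apply: le_trans (union_bound P _ _) _ => [f|]; first exact: (measurable_cyl hU).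
    rewrite (eq_bigr (fun f => (wt (pc cf) f)%:E)); last by move=> f _; exact: (prob_cyl hU (mSc cf) (pcS cf)).
    by rewrite sumEFin lee_fin; apply: two_tail.
  have hB : (P Bad <= ((G * G * G * G * 2)%:R * (2 * expR (- (t ^+ 2 / (8 * n%:R)))))%:E)%E.
    apply: le_trans (union_bound P _ _) _ => [cf|].
      by apply: bigsetU_measurable => f _; exact: (measurable_cyl hU).
    apply: (@le_trans _ _ (\sum_(cf : C) (2 * expR (- (t ^+ 2 / (8 * n%:R))))%:E)%E).
      by apply: lee_sum => cf _; exact: hB1.
    have hC : #|{: C}| = (G * G * G * G * 2)%N by rewrite !card_prod !card_ord card_bool.
    rewrite sumEFin sumr_const (_ : #|_| = (G * G * G * G * 2)%N); last exact: hC.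
    rewrite lee_fin; set xx := 2 * expR _; by rewrite mulr_natl.
  have hexp : (G * G * G * G * 2)%:R * (2 * expR (- (t ^+ 2 / (8 * n%:R)))) <= 2 * Rr ^- 10.
    have L0 : 0 <= 120 * n%:R * L by rewrite mulr_ge0 ?mulr_ge0 //; lra.
    have ex : expR (- (t ^+ 2 / (8 * n%:R))) = (Rr ^+ 15)^-1.
      rewrite /t sqr_sqrtr //.
      have -> : 120 * n%:R * L / (8 * n%:R) = 15%:R * L.
        by field; rewrite lt0r_neq0.
      by rewrite expRN expRM_natl /L lnK // posrE.
    rewrite ex.
    have g0 : (0 : R) <= G%:R by [].
    have g4 : G%:R ^+ 4 <= Rr ^+ 4 by apply: lerXn2r => //; rewrite nnegrE ltW.
    have -> : (G * G * G * G * 2)%:R = G%:R ^+ 4 * 2 :> R by rewrite !natrM; ring.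
    have R15 : 0 < Rr ^+ 15 by rewrite exprn_gt0.
    have -> : Rr ^- 10 = Rr ^+ 5 / Rr ^+ 15.
      have Rn0 : Rr != 0 by rewrite lt0r_neq0.
      rewrite (_ : Rr ^+ 15 = Rr ^+ 10 * Rr ^+ 5); last by rewrite -exprD.
      by field; rewrite ?expf_neq0.
    have -> : G%:R ^+ 4 * 2 * (2 * (Rr ^+ 15)^-1) = (4 * G%:R ^+ 4) / Rr ^+ 15 by ring.
    have -> : 2 * (Rr ^+ 5 / Rr ^+ 15) = (2 * Rr ^+ 5) / Rr ^+ 15 by ring.
    rewrite ler_pM2r ?invr_gt0 //.
    have -> : Rr ^+ 5 = Rr ^+ 4 * Rr by rewrite exprSr.
    have R4 : 0 <= Rr ^+ 4 by rewrite exprn_ge0 // ltW.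
    nra.
  have hX : (P (BadU `|` Bad) <= (2 * Rr ^- 10)%:E)%E.
    apply: le_trans (measureU2 _ _ _) _ => //.
    apply: le_trans (leeD hPU hB) _.
    by rewrite add0e lee_fin.
  rewrite probability_setC; last exact: measurableU.
  set X := P _ in hX *.
  have Xfin : X \is a fin_num.
    by rewrite ge0_fin_numE ?measure_ge0 // (le_lt_trans hX) // ltry.
  rewrite -(fineK Xfin) in hX *; rewrite lee_fin in hX; rewrite -EFinB lee_fin; lra.
move=> w hw x y hx hy.
have hw1 k : 0 <= U k w < 1.
  apply/negPn/negP => hk; apply: hw; left; apply: (@in_bigsetU _ _ _ _ k) => //=.
  by rewrite in_itv /=; apply/negP.
have hw2 cf f : t < `|dev (pc cf) f| -> ~ cyl U (Sc cf) f w.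
  move=> hf hc; apply: hw; right; apply: (@in_bigsetU _ _ _ _ cf) => //.
  exact: (@in_bigsetU _ _ _ _ f).
have hdev cf : `|\sum_(k < n) ((`[< Sc cf k (U k w) >])%:R - pc cf k)| <= t.
  pose fw := [ffun k => `[< Sc cf k (U k w) >]].
  have : ~ t < `|dev (pc cf) fw|.
    move=> hf; apply: (hw2 cf fw hf) => k _; rewrite /fw ffunE /=.
    by case: asboolP.
  rewrite /dev; under eq_bigr do rewrite ffunE.
  by move/negP; rewrite -leNgt.
have hball z : Omega z -> `|z.1 - c.1| <= rho /\ `|z.2 - c.2| <= rho.
  move=> hz; have := hOm z hz; rewrite -(real_normK (num_real D)) -/rho => hb.
  split; first exact: sq_bound rho0 hb.
  by apply: (sq_bound (b := z.1 - c.1) rho0); rewrite addrC.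
have hG (i : nat) : i%:R <= 2 * rho / h -> (i < G)%N.
  move=> hi; rewrite ltnS truncn_ge_nat; last first.
    by apply: divr_ge0; [apply: mulr_ge0 => //; lra | lra].
  suff <- : 2 * rho / h = 16 * rho * n%:R / eps by [].
  by rewrite /h; field; rewrite !lt0r_neq0.
have [hx1 hx2] := hball x hx.
have [hy1 hy2] := hball y hy.
have [ix [ix1 ix2]] := grid_idx h0 hx1.
have [jx [jx1 jx2]] := grid_idx h0 hx2.
have [iy [iy1 iy2]] := grid_idx h0 hy1.
have [jy [jy1 jy2]] := grid_idx h0 hy2.
pose cfs (s : bool) : C := (inord ix, inord jx, inord iy, inord jy, s).
have hX s : X' (cfs s) = gp c rho h ix jx.
  by rewrite /X' /= !inordK // ?hG.
have hY s : Y' (cfs s) = gp c rho h iy jy.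
  by rewrite /Y' /= !inordK // ?hG.
have hak s k : `|ak n k x y - ak n k (X' (cfs s)) (Y' (cfs s))| <= r.
  by rewrite hX hY; apply: min_lip; apply: dot_lip.
have hbk s k : `|bk n k x y - bk n k (X' (cfs s)) (Y' (cfs s))| <= r.
  by rewrite hX hY; apply: max_lip; apply: dot_lip.
have hupk k : (Nk eps (U k w) n k x y)%:R - (bk n k x y - ak n k x y) / eps <=
    (`[< Sc (cfs true) k (U k w) >])%:R - pc (cfs true) k + 4 * r / eps.
  have := hak true k; have := hbk true k; rewrite !ler_norml => /andP[b1 b2] /andP[a1 a2].
  have hab := ak_le_bk n k (X' (cfs true)) (Y' (cfs true)).
  apply: (@term_upper R eps (U k w) (ak n k x y) (bk n k x y)
     (al (cfs true) k) (be (cfs true) k) r e0 (ak_le_bk n k x y)) => //;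
    rewrite /al /be /alf /bet /=; lra.
have hlok k : (`[< Sc (cfs false) k (U k w) >])%:R - pc (cfs false) k - 4 * r / eps <=
    (Nk eps (U k w) n k x y)%:R - (bk n k x y - ak n k x y) / eps.
  have := hak false k; have := hbk false k; rewrite !ler_norml => /andP[b1 b2] /andP[a1 a2].
  have hab := ak_le_bk n k (X' (cfs false)) (Y' (cfs false)).
  apply: (@term_lower R eps (U k w) (ak n k x y) (bk n k x y)
     (al (cfs false) k) (be (cfs false) k) r e0) => //;
    rewrite /al /be /alf /bet /=.
  - lra.
  - by rewrite le_max lexx.
  - case: (leP (ak n k (X' (cfs false)) (Y' (cfs false)) + r)
               (bk n k (X' (cfs false)) (Y' (cfs false)) - r)) => hm.
      by left; lra.
    by right.
  - case: (leP (ak n k (X' (cfs false)) (Y' (cfs false)) + r)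
               (bk n k (X' (cfs false)) (Y' (cfs false)) - r)) => hm; lra.
have up : \sum_(k < n) ((Nk eps (U k w) n k x y)%:R - (bk n k x y - ak n k x y) / eps)
   <= \sum_(k < n) ((`[< Sc (cfs true) k (U k w) >])%:R - pc (cfs true) k) + 1.
  apply: (@le_trans _ _ (\sum_(k < n) ((`[< Sc (cfs true) k (U k w) >])%:R
                           - pc (cfs true) k + 4 * r / eps))).
    by apply: ler_sum => k _; exact: hupk.
  have nr' := nr; rewrite mulr_natl in nr'.
  by rewrite big_split /= sumr_const card_ord nr'.
have lo : \sum_(k < n) ((`[< Sc (cfs false) k (U k w) >])%:R - pc (cfs false) k) - 1 <=
    \sum_(k < n) ((Nk eps (U k w) n k x y)%:R - (bk n k x y - ak n k x y) / eps).
  apply: (@le_trans _ _ (\sum_(k < n) ((`[< Sc (cfs false) k (U k w) >])%:R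
                           - pc (cfs false) k - 4 * r / eps))); last first.
    by apply: ler_sum => k _; exact: hlok.
  have nr' := nr; rewrite mulr_natl in nr'.
  by rewrite [X in _ <= X]big_split /= sumr_const card_ord mulNrn nr'.
have hu := hdev (cfs true); have hl := hdev (cfs false).
rewrite ler_norml in hu; rewrite ler_norml in hl.
case/andP: hu => hu1 hu2; case/andP: hl => hl1 hl2.
have nL0 : 0 <= n%:R * L by rewrite mulr_ge0 //; lra.
have tb : t <= 11 * Num.sqrt (n%:R * L).
  rewrite /t -mulrA.
  have h11 : 120 * (n%:R * L) <= 11 ^+ 2 * (n%:R * L) by rewrite ler_wpM2r //; lra.
  apply: le_trans (ler_wsqrtr h11) _.
  by rewrite sqrtrM ?sqrtr_sqr ?sqr_ge0 // ger0_norm.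
have sq0 := sqrtr_ge0 (n%:R * L).
rewrite ler_norml; apply/andP; split; lra.
Qed.
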